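(* Let $\Gamma$ be the directed union of a directed family of subgroups $(\Gamma_i)_{i\in I}$, each of which is $2$-boundedly acyclic. Then $\Gamma$ is $2$-boundedly acyclic.
   Context: A group $G$ is $2$-boundedly acyclic if $\operatorname{H}^1_b(G;\mathbb{R}) \cong 0$ and $\operatorname{H}^2_b(G;\mathbb{R}) \cong 0$, where $\operatorname{H}^*_b(\cdot;\mathbb{R})$ is bounded cohomology with trivial real coefficients. *)

(* Defs.v *)
From mathcomp Require Import ssreflect ssrfun ssrbool eqtype ssrnat seq monoid.
From Stdlib Require Import Reals.

Set Implicit Arguments.
Unset Strict Implicit.
Unset Printing Implicit Defensive.

Local Open Scope group_scope.

Section BoundedCohomology.
Variable G : groupType.

Definition is_subgroup (H : G -> Prop) : Prop :=
  H 1 /\ (forall x y, H x -> H y -> H (x * y)) /\ (forall x, H x -> H x^-1).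

(* Real cochains: functions on lists of group elements; an n-cochain is
   evaluated on lists of length n (the n-tuple (g_1,...,g_n)). *)
Definition cochain := list G -> R.

(* merge i [g_1;...;g_k] replaces g_(i+1), g_(i+2) by g_(i+1) * g_(i+2). *)
Fixpoint merge (i : nat) (l : list G) : list G :=
  match i, l with
  | O, a :: b :: l' => (a * b) :: l'
  | S i', a :: l' => a :: merge i' l'
  | _, _ => l
  end.

Fixpoint sumR (n : nat) (F : nat -> R) : R :=
  match n with
  | O => 0%R
  | S k => (sumR k F + F (S k))%R
  end.

(* Inhomogeneous (bar) coboundary, trivial real coefficients, from degree n
   to degree n+1:
   (delta f)(g_1..g_{n+1}) = f(g_2..g_{n+1})
       + sum_{i=1}^n (-1)^i f(g_1..g_i g_{i+1}..g_{n+1})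
       + (-1)^{n+1} f(g_1..g_n). *)
Definition delta (n : nat) (f : cochain) : cochain := fun l =>
  (f (List.tl l)
   + sumR n (fun i => (-1) ^ i * f (merge (i - 1) l))
   + (-1) ^ (n + 1) * f (List.removelast l))%R.

(* Cochains on the subgroup S: only tuples with entries in S matter. *)
Definition on_tuples (H : G -> Prop) (n : nat) (P : list G -> Prop) : Prop :=
  forall l, length l = n -> List.Forall H l -> P l.

Definition bounded_cochain (H : G -> Prop) (n : nat) (f : cochain) : Prop :=
  exists C : R, on_tuples H n (fun l => (Rabs (f l) <= C)%R).

Definition bounded_cocycle (H : G -> Prop) (n : nat) (f : cochain) : Prop :=
  bounded_cochain H n f /\ on_tuples H n.+1 (fun l => delta n f l = 0%R).

(* H^{n+1}_b(S; R) = 0: every bounded (n+1)-cocycle on S is the coboundary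
   of a bounded n-cochain on S. *)
Definition Hb_vanishes (H : G -> Prop) (n : nat) : Prop :=
  forall f, bounded_cocycle H n.+1 f ->
    exists g, bounded_cochain H n g /\
      on_tuples H n.+1 (fun l => f l = delta n g l).

Definition two_boundedly_acyclic (H : G -> Prop) : Prop :=
  Hb_vanishes H 0 /\ Hb_vanishes H 1.

End BoundedCohomology.

(* Main.v *)
Require Import Defs.
From mathcomp Require Import ssreflect ssrfun ssrbool eqtype ssrnat seq monoid.
From Stdlib Require Import Reals Lra Psatz ClassicalEpsilon.
Set Implicit Arguments.

Section Aux.
Variable Gamma : groupType.
Local Open Scope R_scope.

Lemma on_tuples_mono (H H' : Gamma -> Prop) n (P : list Gamma -> Prop) :
  (forall x, H' x -> H x) -> on_tuples H n P -> on_tuples H' n P.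
Proof.
move=> HH' Ht l Hl Hf; apply: Ht => //; exact: (List.Forall_impl _ HH' Hf).
Qed.

Lemma halving (S : Gamma -> Prop) (u : Gamma -> R) (C D : R) :
  (forall x, S x -> S (x * x)%g) -> (forall x, S x -> Rabs (u x) <= C) ->
  (forall x, S x -> 2 * Rabs (u x) <= Rabs (u (x * x)%g) + D) ->
  forall x, S x -> Rabs (u x) <= D.
Proof.
move=> Ssq hC hD.
have P : forall n x, S x -> Rabs (u x) <= D + (C - D) * (/2)^n.
  elim=> [|n IH] x Sx.
    have := hC x Sx; simpl; (intros; lra).
  have h1 := IH _ (Ssq x Sx); have h2 := hD x Sx.
  replace ((C - D) * (/2)^(n.+1)) with (/2 * ((C - D) * (/2)^n)) by (simpl; ring).
  (intros; lra).
move=> x Sx; apply: Rnot_lt_le => lt.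
have e0 : 0 < (Rabs (u x) - D) / (Rabs (C - D) + 1).
  apply: Rdiv_lt_0_compat; have := Rabs_pos (C - D); (intros; lra).
have h2 : Rabs (/2) < 1 by rewrite Rabs_right; (intros; lra).
have [N HN] := pow_lt_1_zero _ h2 _ e0.
have := HN N (le_n N).
have r0 : 0 < (/2)^N by apply: pow_lt; (intros; lra).
rewrite Rabs_right; last (intros; lra).
move=> hr.
have := P N x Sx.
have hab := Rle_abs (C - D).
have hpos := Rabs_pos (C - D).
have : (Rabs (C - D) + 1) * (/ 2) ^ N < Rabs (u x) - D.
  have -> : Rabs (u x) - D = (Rabs (C - D) + 1) * ((Rabs (u x) - D) / (Rabs (C - D) + 1)).
    field; (intros; lra).
  apply: Rmult_lt_compat_l => //; (intros; lra).
(intros; nra).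
Qed.

Lemma delta1E (g : cochain Gamma) a b :
  delta 1 g [:: a; b] = g [:: b] - g (@cons (Group.sort Gamma) (a * b)%g [::]) + g [:: a].
Proof. rewrite /delta /=; ring. Qed.

Lemma delta0E (g : cochain Gamma) a : delta 0 g [:: a] = 0.
Proof. rewrite /delta /=; ring. Qed.

Definition sol (S : Gamma -> Prop) (f g : cochain Gamma) :=
  bounded_cochain S 1 g /\ on_tuples S 2 (fun l => f l = delta 1 g l).

Lemma sol_uniq S f g1 g2 : is_subgroup S -> sol S f g1 -> sol S f g2 ->
  forall x, S x -> g1 [:: x] = g2 [:: x].
Proof.
move=> [_ [Sm _]] [[C1 hC1] e1] [[C2 hC2] e2] x Sx.
pose u y := g1 [:: y] - g2 [:: y].
have hb : forall y, S y -> Rabs (u y) <= C1 + C2.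
  move=> y Sy; rewrite /u.
  have := hC1 [:: y] erefl (List.Forall_cons _ Sy (List.Forall_nil _)).
  have := hC2 [:: y] erefl (List.Forall_cons _ Sy (List.Forall_nil _)).
  have := Rabs_triang (g1 [:: y]) (- g2 [:: y]); rewrite Rabs_Ropp /Rminus; (intros; lra).
have hq : forall y, S y -> 2 * Rabs (u y) <= Rabs (u (y * y)%g) + 0.
  move=> y Sy.
  have F : List.Forall S [:: y; y] by repeat constructor.
  have := e1 [:: y; y] erefl F; have := e2 [:: y; y] erefl F; rewrite !delta1E => E2 E1.
  have Hu : u (y * y)%g = 2 * u y.
    rewrite /u. lra.
  rewrite Hu.
  rewrite Rabs_mult (Rabs_right (IZR 2)); (intros; lra).
have := @halving S u (C1+C2) 0 (fun y Sy => Sm _ _ Sy Sy) hb hq x Sx.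
have := Rabs_pos (u x); rewrite /u => h1 h2.
have := Rle_abs (g1 [:: x] - g2 [:: x]); have := Rle_abs (-(g1 [:: x] - g2 [:: x])); rewrite Rabs_Ropp; (intros; lra).
Qed.

Lemma sol_bound S f g D : is_subgroup S -> sol S f g ->
  on_tuples S 2 (fun l => Rabs (f l) <= D) ->
  forall x, S x -> Rabs (g [:: x]) <= D.
Proof.
move=> [_ [Sm _]] [[C hC] e] hD x Sx.
apply: (@halving S (fun y => g [:: y]) C D (fun y Sy => Sm _ _ Sy Sy)) => //.
  move=> y Sy; exact: hC [:: y] erefl (List.Forall_cons _ Sy (List.Forall_nil _)).
move=> y Sy.
have F : List.Forall S [:: y; y] by repeat constructor.
have := e [:: y; y] erefl F; have := hD [:: y; y] erefl F; rewrite delta1E => h E.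
have -> : g (@cons (Group.sort Gamma) (y * y)%g [::]) = 2 * g [:: y] - f [:: y; y] by (intros; lra).
have T := Rabs_triang (2 * g [:: y] - f [:: y; y]) (f [:: y; y]).
replace (2 * g [:: y] - f [:: y; y] + f [:: y; y]) with (2 * g [:: y]) in T by ring.
rewrite Rabs_mult (Rabs_right (IZR 2)) in T; (intros; lra).
Qed.

End Aux.

Theorem corollary4p16 (Gamma : groupType) (I : Type)
  (Gam : I -> (Gamma -> Prop))
  (Hsub : forall i, is_subgroup (Gam i))
  (Hdir : forall i j, exists k,
      (forall g, Gam i g -> Gam k g) /\ (forall g, Gam j g -> Gam k g))
  (Hunion : forall g : Gamma, exists i, Gam i g)
  (Hbac : forall i, two_boundedly_acyclic (Gam i)) :
  two_boundedly_acyclic (fun _ : Gamma => True).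
Proof.
have T : forall i x, Gam i x -> True by [].
split.
- move=> f [[D hD] hc].
  exists (fun _ => 0%R); split; first by exists 0%R => l _ _; rewrite Rabs_R0; (intros; lra).
  move=> [|x [|y l]] //= _ _.
  have [i xi] := Hunion x.
  have [g [_ e]] := (Hbac i).1 f (conj (ex_intro _ D (on_tuples_mono (T i) hD))
                                      (on_tuples_mono (T i) hc)).
  rewrite (e [:: x] erefl (List.Forall_cons _ xi (List.Forall_nil _))) !delta0E.
  by rewrite /delta /=; ring.
- move=> f [[D hD] hc].
  have ex : forall i, exists g, sol (Gam i) f g.
    move=> i; have [g [bg e]] := (Hbac i).2 f
      (conj (ex_intro _ D (on_tuples_mono (T i) hD)) (on_tuples_mono (T i) hc)).
    by exists g.
  have key : forall i j gi gj x, sol (Gam i) f gi -> sol (Gam j) f gj ->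
      Gam i x -> Gam j x -> gi [:: x] = gj [:: x].
    move=> i j gi gj x si sj xi xj.
    have [k [ik jk]] := Hdir i j.
    have [gk sk] := ex k.
    have restr : forall m, (forall y, Gam m y -> Gam k y) -> sol (Gam m) f gk.
      move=> m mk; case: sk => [[C hC] e]; split.
        by exists C; apply: on_tuples_mono hC.
      exact: on_tuples_mono e.
    rewrite (sol_uniq (Hsub i) si (restr i ik) _ xi).
    by rewrite (sol_uniq (Hsub j) sj (restr j jk) _ xj).
  have exr : forall x, { r : R | exists i g, Gam i x /\ sol (Gam i) f g /\ g [:: x] = r }.
    move=> x; apply: constructive_indefinite_description.
    have [i xi] := Hunion x; have [g sg] := ex i.
    by exists (g [:: x]), i, g.
  pose G (l : list Gamma) := match l with [:: x] => proj1_sig (exr x) | _ => 0%R end.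
  have GE : forall i g x, sol (Gam i) f g -> Gam i x -> G [:: x] = g [:: x].
    move=> i g x sg xi; rewrite /G; have [j [gj [xj [sj e]]]] := proj2_sig (exr x); rewrite -e.
    exact: key sj sg xj xi.
  exists G; split.
    exists D => [[|x [|y l]]] //= _ _.
    have [i xi] := Hunion x; have [g sg] := ex i.
    have -> : sval (exr x) = g [:: x] := GE _ _ _ sg xi.
    exact: sol_bound (Hsub i) sg (on_tuples_mono (T i) hD) x xi.
  move=> [|a [|b [|c l]]] //= _ _.
  have [i ai] := Hunion a; have [j bj] := Hunion b.
  have [k [ik jk]] := Hdir i j.
  have [gk sk] := ex k.
  have ak := ik _ ai; have bk := jk _ bj.
  have abk := (Hsub k).2.1 _ _ ak bk.
  rewrite delta1E (GE _ _ _ sk ak) (GE _ _ _ sk bk) (GE _ _ _ sk abk).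
  case: sk => _ e.
  have F : List.Forall (Gam k) [:: a; b] by repeat constructor.
  by rewrite (e [:: a; b] erefl F) delta1E.
Qed.
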